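(* For every integer $n$, \[ \sum_{k = (1 + ( - 1)^n )/2}^n ( - 1)^{k - 1} L_k^{\,4} = ( - 1)^{n - 1} \frac{5}{3}F_n F_{n + 1} \left(L_{n - 2} L_{n + 3} + ( - 1)^n 2\right)\,. \] (Here the summation starts at $k=1$ if $n$ is even and at $k=0$ if $n$ is odd.)
   Context: $F_i$ and $L_i$ denote the Fibonacci and Lucas numbers, defined for all $i\in\mathbb{Z}$ by $F_i=F_{i-1}+F_{i-2}$, $F_0=0$, $F_1=1$, and $L_i=L_{i-1}+L_{i-2}$, $L_0=2$, $L_1=1$; equivalently $F_{-i}=(-1)^{i-1}F_i$ and $L_{-i}=(-1)^iL_i$. Summation convention for an arbitrary integer upper limit: $\sum_{k=a}^{a-1} f(k)=0$, and for $n<a-1$, $\sum_{k=a}^{n} f(k) = -\sum_{k=n+1}^{a-1} f(k)$. *)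

(* Defs.v *)
From Stdlib Require Import ZArith Reals List.
Open Scope Z_scope.

Fixpoint fib_lucas_nat (n : nat) : Z * Z :=
  match n with
  | O => (0, 1)
  | S m => let (a, b) := fib_lucas_nat m in (b, a + b)
  end.

Definition fibN (n : nat) : Z := fst (fib_lucas_nat n).
Fixpoint lucas_pair (n : nat) : Z * Z :=
  match n with
  | O => (2, 1)
  | S m => let (a, b) := lucas_pair m in (b, a + b)
  end.
Definition lucN (n : nat) : Z := fst (lucas_pair n).

Definition neg1pow (m : Z) : Z := if Z.even m then 1 else -1.

Definition F (i : Z) : Z :=
  if 0 <=? i then fibN (Z.to_nat i)
  else neg1pow (- i - 1) * fibN (Z.to_nat (- i)).
Definition L (i : Z) : Z :=
  if 0 <=? i then lucN (Z.to_nat i)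
  else neg1pow (- i) * lucN (Z.to_nat (- i)).

(* Ordinary sum over a <= k <= b (empty if b < a) *)
Definition sumZ (a b : Z) (f : Z -> R) : R :=
  fold_right Rplus 0%R
    (map (fun i : nat => f (a + Z.of_nat i)) (seq 0 (Z.to_nat (b - a + 1)))).

(* Sum with the paper's convention for arbitrary integer upper limit:
   sum_{k=a}^{n} f k, and for n < a-1 it equals - sum_{k=n+1}^{a-1} f k. *)
Definition gsum (a n : Z) (f : Z -> R) : R :=
  if a <=? n + 1 then sumZ a n f else (- sumZ (n + 1) (a - 1) f)%R.

(* Main.v *)
Require Import Defs.
From Stdlib Require Import ZArith Reals List Lia Lra.
Open Scope Z_scope.

Lemma fold_plus_c (l : list R) (c : R) :
  fold_right Rplus c l = (fold_right Rplus 0 l + c)%R.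
Proof. induction l; simpl; [lra| rewrite IHl; lra]. Qed.

Lemma sumZ_front a b f : a <= b -> sumZ a b f = (f a + sumZ (a+1) b f)%R.
Proof.
  intros H. unfold sumZ.
  replace (Z.to_nat (b-a+1)) with (S (Z.to_nat (b-(a+1)+1))) by lia.
  simpl (seq 0 _). cbn [map fold_right]. rewrite <- seq_shift. rewrite map_map.
  rewrite Z.add_0_r. f_equal. f_equal. apply map_ext. intros i. f_equal. lia.
Qed.

Lemma sumZ_back a b f : a <= b + 1 -> sumZ a (b+1) f = (sumZ a b f + f (b+1)%Z)%R.
Proof.
  intros H. unfold sumZ.
  replace (Z.to_nat (b+1-a+1)) with (S (Z.to_nat (b-a+1))) by lia.
  rewrite seq_S, map_app, fold_right_app. simpl.
  rewrite fold_plus_c. rewrite Rplus_0_r. f_equal. f_equal. lia.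
Qed.

Lemma sumZ_empty a f : sumZ a (a-1) f = 0%R.
Proof. unfold sumZ. replace (a-1-a+1) with 0 by ring. reflexivity. Qed.

Lemma gsum_step a n f : gsum a n f = (gsum a (n-1) f + f n)%R.
Proof.
  unfold gsum.
  destruct (Z.leb_spec a (n+1)); destruct (Z.leb_spec a (n-1+1)).
  - pose proof (sumZ_back a (n-1) f ltac:(lia)) as H1.
    replace (n-1+1) with n in H1 by ring. lra.
  - replace a with (n+1) by lia. replace (n+1-1) with n by ring.
    replace (n-1+1) with n by ring.
    rewrite (sumZ_front n n) by lia.
    assert (He := sumZ_empty (n+1) f). replace (n+1-1) with n in He by ring.
    replace (n+1-1) with n by ring. lra.
  - lia.
  - replace (n-1+1) with n by ring.
    rewrite (sumZ_front n (a-1)) by lia. lra.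
Qed.

Lemma neg1pow_succ n : neg1pow (n+1) = - neg1pow n.
Proof. unfold neg1pow. rewrite Z.even_add. simpl (Z.even 1). destruct (Z.even n); reflexivity. Qed.

Lemma neg1pow_pred n : neg1pow (n-1) = - neg1pow n.
Proof. rewrite <- (Z.sub_add 1 n) at 2. rewrite neg1pow_succ. ring. Qed.

Lemma neg1pow_sq n : neg1pow n * neg1pow n = 1.
Proof. unfold neg1pow. destruct (Z.even n); reflexivity. Qed.

Lemma fibN_SS m : fibN (S (S m)) = fibN (S m) + fibN m.
Proof. unfold fibN. simpl. destruct (fib_lucas_nat m). simpl. ring. Qed.

Lemma lucN_SS m : lucN (S (S m)) = lucN (S m) + lucN m.
Proof. unfold lucN. simpl. destruct (lucas_pair m). simpl. ring. Qed.

Lemma F_nat (m : nat) : F (Z.of_nat m) = fibN m.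
Proof. unfold F. rewrite (proj2 (Z.leb_le _ _)) by lia. rewrite Nat2Z.id. reflexivity. Qed.

Lemma L_nat (m : nat) : L (Z.of_nat m) = lucN m.
Proof. unfold L. rewrite (proj2 (Z.leb_le _ _)) by lia. rewrite Nat2Z.id. reflexivity. Qed.

Lemma F_neg (m : nat) : F (- Z.of_nat (S m)) = neg1pow (Z.of_nat m) * fibN (S m).
Proof.
  unfold F. destruct (Z.leb_spec 0 (- Z.of_nat (S m))); [lia|].
  replace (- - Z.of_nat (S m) - 1) with (Z.of_nat m) by lia.
  replace (- - Z.of_nat (S m)) with (Z.of_nat (S m)) by lia.
  rewrite Nat2Z.id. reflexivity.
Qed.

Lemma L_neg (m : nat) : L (- Z.of_nat (S m)) = - neg1pow (Z.of_nat m) * lucN (S m).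
Proof.
  unfold L. destruct (Z.leb_spec 0 (- Z.of_nat (S m))); [lia|].
  replace (- - Z.of_nat (S m)) with (Z.of_nat m + 1) by lia.
  rewrite neg1pow_succ.
  replace (Z.of_nat m + 1) with (Z.of_nat (S m)) by lia.
  rewrite Nat2Z.id. reflexivity.
Qed.

Lemma FR n : F (n+2) = F (n+1) + F n.
Proof.
  destruct (Z_le_gt_dec 0 n).
  - set (m := Z.to_nat n).
    assert (Hn : n = Z.of_nat m) by lia. rewrite Hn.
    replace (Z.of_nat m+2) with (Z.of_nat (S (S m))) by lia.
    replace (Z.of_nat m+1) with (Z.of_nat (S m)) by lia.
    rewrite !F_nat. apply fibN_SS.
  - destruct (Z.eq_dec n (-1)); [subst; reflexivity|].
    destruct (Z.eq_dec n (-2)); [subst; reflexivity|].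
    set (m := Z.to_nat (-n-3)).
    replace (n+2) with (- Z.of_nat (S m)) by lia.
    replace (n+1) with (- Z.of_nat (S (S m))) by lia.
    replace n with (- Z.of_nat (S (S (S m)))) by lia.
    rewrite !F_neg. rewrite !Nat2Z.inj_succ. unfold Z.succ.
    rewrite !neg1pow_succ. rewrite !fibN_SS. ring.
Qed.

Lemma LR n : L (n+2) = L (n+1) + L n.
Proof.
  destruct (Z_le_gt_dec 0 n).
  - set (m := Z.to_nat n).
    assert (Hn : n = Z.of_nat m) by lia. rewrite Hn.
    replace (Z.of_nat m+2) with (Z.of_nat (S (S m))) by lia.
    replace (Z.of_nat m+1) with (Z.of_nat (S m)) by lia.
    rewrite !L_nat. apply lucN_SS.
  - destruct (Z.eq_dec n (-1)); [subst; reflexivity|].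
    destruct (Z.eq_dec n (-2)); [subst; reflexivity|].
    set (m := Z.to_nat (-n-3)).
    replace (n+2) with (- Z.of_nat (S m)) by lia.
    replace (n+1) with (- Z.of_nat (S (S m))) by lia.
    replace n with (- Z.of_nat (S (S (S m)))) by lia.
    rewrite !L_neg. rewrite !Nat2Z.inj_succ. unfold Z.succ.
    rewrite !neg1pow_succ. rewrite !lucN_SS. ring.
Qed.

Lemma FR' a b c : b = a + 1 -> c = a + 2 -> F c = F b + F a.
Proof. intros -> ->. apply FR. Qed.
Lemma LR' a b c : b = a + 1 -> c = a + 2 -> L c = L b + L a.
Proof. intros -> ->. apply LR. Qed.

Lemma L_F n : L n = F (n-1) + F (n+1).
Proof.
  assert (H : forall n, L n = F (n-1) + F (n+1) /\ L (n+1) = F n + F (n+2)).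
  { intro k. induction k using Z.peano_ind.
    - split; reflexivity.
    - destruct IHk as [H1 H2]. unfold Z.succ. split.
      + rewrite H2. f_equal; f_equal; ring.
      + pose proof (LR' k (k+1) (k+1+1) eq_refl ltac:(ring)).
        pose proof (FR' (k-1) k (k+1) ltac:(ring) ltac:(ring)).
        pose proof (FR' (k+1) (k+2) (k+1+2) ltac:(ring) ltac:(ring)).
        lia.
    - destruct IHk as [H1 H2]. replace (Z.pred k) with (k-1) by lia. split.
      + pose proof (LR' (k-1) k (k+1) ltac:(ring) ltac:(ring)).
        pose proof (FR' (k-1-1) (k-1) k ltac:(ring) ltac:(ring)).
        pose proof (FR' (k-1) k (k+1) ltac:(ring) ltac:(ring)).
        pose proof (FR' k (k+1) (k+2) ltac:(ring) ltac:(ring)).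
        replace (k-1+1) with k by ring. lia.
      + replace (k-1+1) with k by ring. replace (k-1+2) with (k+1) by ring.
        rewrite H1. ring. }
  apply H.
Qed.

Lemma cassini n : F (n+1) ^ 2 - F n * F (n+1) - F n ^ 2 = neg1pow n.
Proof.
  induction n using Z.peano_ind.
  - reflexivity.
  - unfold Z.succ. rewrite (FR' n (n+1) (n+1+1)) by ring.
    rewrite neg1pow_succ, <- IHn. ring.
  - replace (Z.pred n) with (n-1) by lia. replace (n-1+1) with n by ring.
    rewrite (FR' (n-1) n (n+1)) in IHn by ring.
    rewrite neg1pow_pred, <- IHn. ring.
Qed.

Definition R3 n := -5 * neg1pow n * F n * F (n+1) * (L (n-2) * L (n+3) + 2 * neg1pow n)
  + 24 * (1 - neg1pow n).

Lemma R3_step n : R3 n - R3 (n-1) = 3 * (neg1pow (n-1) * L n ^ 4).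
Proof.
  unfold R3.
  replace (n-1+1) with n by ring. replace (n-1-2) with (n-3) by ring.
  replace (n-1+3) with (n+2) by ring.
  rewrite neg1pow_pred.
  pose proof (cassini n) as Hc.
  pose proof (neg1pow_sq n) as Hs2.
  rewrite (L_F (n-2)), (L_F (n+3)), (L_F n), (L_F (n-3)), (L_F (n+2)).
  replace (n-2-1) with (n-3) by ring. replace (n-2+1) with (n-1) by ring.
  replace (n+3-1) with (n+2) by ring. replace (n+3+1) with (n+4) by ring.
  replace (n-3-1) with (n-4) by ring. replace (n-3+1) with (n-2) by ring.
  replace (n+2-1) with (n+1) by ring. replace (n+2+1) with (n+3) by ring.
  assert (E4 : F (n-4) = F (n-2) - F (n-3)).
  { rewrite (FR' (n-4) (n-3) (n-2)) by ring. ring. }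
  assert (E3 : F (n-3) = F (n-1) - F (n-2)).
  { rewrite (FR' (n-3) (n-2) (n-1)) by ring. ring. }
  assert (E2 : F (n-2) = F n - F (n-1)).
  { rewrite (FR' (n-2) (n-1) n) by ring. ring. }
  assert (E1 : F (n-1) = F (n+1) - F n).
  { rewrite (FR' (n-1) n (n+1)) by ring. ring. }
  assert (P4 : F (n+4) = F (n+3) + F (n+2)) by (apply FR'; ring).
  assert (P3 : F (n+3) = F (n+2) + F (n+1)) by (apply FR'; ring).
  assert (P2 : F (n+2) = F (n+1) + F n) by (apply FR'; ring).
  rewrite E4, E3, E2, E1, P4, P3, P2. clear E4 E3 E2 E1 P4 P3 P2.
  set (u := F n) in *. set (v := F (n+1)) in *. set (s := neg1pow n) in *.
  assert (Hs : s - (v*v - u*v - u*u) = 0) by (rewrite <- Hc; ring).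
  assert (HE : (v*v - u*v - u*u) * (v*v - u*v - u*u) - 1 = 0).
  { replace (v*v - u*v - u*u) with s by lia. lia. }
  match goal with |- ?A = ?B =>
    assert (K : A - B = (-48 + 48*v*v*v*v + -96*u*v*v*v + -10*u*u*s + -48*u*u*v*v + 96*u*u*u*v + 48*u*u*u*u) * (s - (v*v - u*v - u*u))
       + (48*v*v + -48*u*v + -48*u*u) * ((v*v - u*v - u*u) * (v*v - u*v - u*u) - 1)) by ring
  end.
  rewrite Hs, HE in K. lia.
Qed.

Definition fK (k : Z) : R := IZR (neg1pow (k - 1) * L k ^ 4)%Z.

Lemma T_R3 n : (3 * gsum 1 n fK = IZR (R3 n))%R.
Proof.
  induction n using Z.peano_ind.
  - assert (H0 : R3 0 = 0) by reflexivity. rewrite H0.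
    unfold gsum, sumZ. simpl. ring.
  - unfold Z.succ. rewrite gsum_step. replace (n+1-1) with n by ring.
    pose proof (R3_step (n+1)) as H. replace (n+1-1) with n in H by ring.
    replace (R3 (n+1)) with (R3 n + 3 * (neg1pow n * L (n+1) ^ 4)) by (rewrite <- H; ring).
    rewrite plus_IZR, mult_IZR, <- IHn. unfold fK. replace (n+1-1) with n by ring.
    simpl (IZR 3). lra.
  - replace (Z.pred n) with (n-1) by lia.
    rewrite (gsum_step 1 n) in IHn.
    pose proof (R3_step n) as H.
    replace (R3 (n-1)) with (R3 n - 3 * (neg1pow (n-1) * L n ^ 4)) by (rewrite <- H; ring).
    rewrite minus_IZR, mult_IZR, <- IHn. unfold fK. simpl (IZR 3). lra.
Qed.

Lemma gsum01 n : gsum 0 n fK = (fK 0 + gsum 1 n fK)%R.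
Proof.
  induction n using Z.peano_ind.
  - unfold gsum, sumZ. simpl. ring.
  - unfold Z.succ. rewrite (gsum_step 0), (gsum_step 1).
    replace (n+1-1) with n by ring. rewrite IHn. ring.
  - replace (Z.pred n) with (n-1) by lia.
    rewrite (gsum_step 0 n), (gsum_step 1 n) in IHn. lra.
Qed.

Theorem corollary4 (n : Z) :
  gsum ((1 + neg1pow n) / 2)%Z n
       (fun k => IZR (neg1pow (k - 1) * L k ^ 4)%Z)
  = (IZR (neg1pow (n - 1)) * (5 / 3) * IZR (F n) * IZR (F (n + 1))
     * (IZR (L (n - 2) * L (n + 3)) + IZR (neg1pow n) * 2))%R.
Proof.
  change (fun k => IZR (neg1pow (k - 1) * L k ^ 4)%Z) with fK.
  pose proof (T_R3 n) as H. unfold R3 in H.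
  rewrite neg1pow_pred.
  assert (Hc : neg1pow n = 1 \/ neg1pow n = -1) by (unfold neg1pow; destruct (Z.even n); auto).
  destruct Hc as [Hc|Hc]; rewrite Hc in *.
  - change ((1 + 1) / 2) with 1.
    rewrite !plus_IZR, !mult_IZR in H.
    apply (Rmult_eq_reg_l 3); [|lra]. rewrite H.
    rewrite ?plus_IZR, ?mult_IZR, ?minus_IZR. simpl. field.
  - change ((1 + -1) / 2) with 0. rewrite gsum01.
    assert (Hf0 : fK 0 = (-16)%R) by (unfold fK; simpl; reflexivity).
    rewrite Hf0.
    rewrite !plus_IZR, !mult_IZR in H.
    apply (Rmult_eq_reg_l 3); [|lra]. rewrite Rmult_plus_distr_l, H.
    rewrite ?plus_IZR, ?mult_IZR, ?minus_IZR. simpl. field.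
Qed.
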